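(* (a) Let $T_1,\dots,T_n$ be nonvertical affine hyperplanes ($d$-dimensional affine subspaces) of $\mathbb{E}^{d+1}$, no two parallel, and for $i<j$ let $h_{ij}$ be the vertical projection into $\mathbb{E}^d$ of $T_i\cap T_j$. For each $i$ let $Q_i\in\mathbb{E}^d$ be the point such that $Q_i^*$ is the unique point at which a translate of $T_i$ is tangent to $S$. Then $\{h_{ij}\}$ is the Pythagorean arrangement $\mathcal{H}(\Psi;Q_1,\dots,Q_n)$ for some balanced, complete real, additive gain graph $\Psi$ on $\{1,\dots,n\}$. (b) Conversely, let $\Phi$ be a balanced, complete real, additive gain graph on $n$ vertices and let $Q_1,\dots,Q_n$ be distinct points of $\mathbb{E}^d$. Then there exist affine hyperplanes $T_1,\dots,T_n$ of $\mathbb{E}^{d+1}$ such that $\mathcal{H}(\Phi;Q_1,\dots,Q_n)$ equals the arrangement $\{h_{ij}\}$ derived from $T_1,\dots,T_n$ as in (a).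
   Context: $\mathbb{E}^d$ is embedded in $\mathbb{E}^{d+1}$ as $\{z=0\}$, where points of $\mathbb{E}^{d+1}$ have coordinates $(x_1,\dots,x_d,z)$. The fundamental paraboloid is $S:\ z=x_1^2+\cdots+x_d^2$. For $P\in\mathbb{E}^d$, $P^*$ is its vertical projection (lift) into $S$; vertical projection into $\mathbb{E}^d$ forgets $z$. A real, additive gain graph on $\{1,\dots,n\}$: finite graph (multiple edges allowed, every edge with two distinct endpoints) with gains $\phi(e;i,j)\in\mathbb{R}$, $\phi(e;j,i)=-\phi(e;i,j)$; it is balanced if every circle has gain sum $0$ read consistently, and complete if every two vertices are adjacent. With $\psi_{ij}(P)=d(P,Q_i)^2-d(P,Q_j)^2$, the Pythagorean arrangement $\mathcal{H}(\Phi;\mathbf{Q})$ consists of the hyperplanes $h(e)=\{P\in\mathbb{E}^d:\psi_{ij}(P)=\phi(e;i,j)\}$, one per edge $e$ with endpoints $i,j$. *)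

(* Defs.v *)
From HB Require Import structures.
From mathcomp Require Import all_boot all_order all_algebra.
From mathcomp Require Import boolp classical_sets reals.
Set Implicit Arguments. Unset Strict Implicit. Unset Printing Implicit Defensive.
Import Order.TTheory GRing.Theory Num.Theory.
Local Open Scope ring_scope.
Local Open Scope classical_set_scope.

Section Defs.
Variable R : realType.
Variable d : nat.

(* Points of E^d are row vectors 'rV[R]_d; points of E^{d+1} are pairs (x, z). *)
Definition dotp (u v : 'rV[R]_d) : R := \sum_(k < d) u 0 k * v 0 k.
Definition sqdist (P Q : 'rV[R]_d) : R := dotp (P - Q) (P - Q).

Definition nonvertical_hyperplane (T : set ('rV[R]_d * R)) : Prop :=
  exists (w : 'rV[R]_d) (w0 b : R), w0 != 0 /\
    T = [set p | dotp w p.1 + w0 * p.2 = b].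

Definition translate (T : set ('rV[R]_d * R)) (v : 'rV[R]_d * R) :
  set ('rV[R]_d * R) := [set p | T (p.1 - v.1, p.2 - v.2)].

Definition parallel (T1 T2 : set ('rV[R]_d * R)) : Prop :=
  exists v, translate T1 v = T2.

(* tangent hyperplane to the paraboloid S : z = |x|^2 at the lift P^* of P *)
Definition tangentS (P : 'rV[R]_d) : set ('rV[R]_d * R) :=
  [set p | p.2 = dotp P P + 2 * dotp P (p.1 - P)].

Definition vproj (A : set ('rV[R]_d * R)) : set 'rV[R]_d := fst @` A.

Definition derived_arr (n : nat) (T : 'I_n -> set ('rV[R]_d * R)) :
  set (set 'rV[R]_d) :=
  [set h | exists i j : 'I_n, (i < j)%N /\ h = vproj (T i `&` T j)].

(* real additive gain graphs on vertex set 'I_n (multiple edges allowed) *)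
Record gain_graph (n : nat) := GainGraph {
  edge : finType;
  ends : edge -> 'I_n * 'I_n;         (* chosen orientation (i, j) of e *)
  gain : edge -> R;                    (* phi(e; i, j) for ends e = (i, j) *)
  ends_neq : forall e, (ends e).1 != (ends e).2 }.

Definition joins n (G : gain_graph n) (e : edge G) (i j : 'I_n) : bool :=
  (ends e == (i, j)) || (ends e == (j, i)).

Definition phi n (G : gain_graph n) (e : edge G) (i j : 'I_n) : R :=
  if ends e == (i, j) then gain e else - gain e.

Definition balanced n (G : gain_graph n) : Prop :=
  forall (k : nat) (v : 'I_k -> 'I_n) (es : 'I_k -> edge G),
    (2 <= k)%N -> injective v -> injective es ->
    (forall m, joins (es m) (v m) (v (ordS m))) ->
    \sum_(m < k) phi (es m) (v m) (v (ordS m)) = 0.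

Definition complete n (G : gain_graph n) : Prop :=
  forall i j : 'I_n, i != j -> exists e : edge G, joins e i j.

Definition psi n (Q : 'I_n -> 'rV[R]_d) (i j : 'I_n) (P : 'rV[R]_d) : R :=
  sqdist P (Q i) - sqdist P (Q j).

Definition pyth_hyp n (G : gain_graph n) (Q : 'I_n -> 'rV[R]_d) (e : edge G) :
  set 'rV[R]_d :=
  [set P | psi Q (ends e).1 (ends e).2 P = gain e].

Definition pyth_arr n (G : gain_graph n) (Q : 'I_n -> 'rV[R]_d) :
  set (set 'rV[R]_d) := [set h | exists e : edge G, h = pyth_hyp Q e].

End Defs.

(* Main.v *)
Require Import Defs.
From HB Require Import structures.
From mathcomp Require Import all_boot all_order all_algebra.
From mathcomp Require Import boolp classical_sets reals.
From mathcomp Require Import ring lra.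
Set Implicit Arguments. Unset Strict Implicit.
Import Order.TTheory GRing.Theory Num.Theory.
Local Open Scope ring_scope.
Local Open Scope classical_set_scope.

Lemma dotpC (R : realType) d (u v : 'rV[R]_d) : dotp u v = dotp v u.
Proof. by apply: eq_bigr => k _; rewrite mulrC. Qed.

Lemma dotpDr (R : realType) d (u v w : 'rV[R]_d) : dotp u (v + w) = dotp u v + dotp u w.
Proof. by rewrite /dotp -big_split; apply: eq_bigr => k _; rewrite mxE mulrDr. Qed.

Lemma dotpBr (R : realType) d (u v w : 'rV[R]_d) : dotp u (v - w) = dotp u v - dotp u w.
Proof. by rewrite /dotp -sumrB; apply: eq_bigr => k _; rewrite !mxE mulrBr. Qed.

Lemma dotpZr (R : realType) d (u v : 'rV[R]_d) a : dotp u (a *: v) = a * dotp u v.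
Proof. by rewrite /dotp mulr_sumr; apply: eq_bigr => k _; rewrite !mxE mulrCA. Qed.

Lemma dotp0r (R : realType) d (u : 'rV[R]_d) : dotp u 0 = 0.
Proof. by rewrite /dotp big1 // => k _; rewrite mxE mulr0. Qed.

Lemma dotpBl (R : realType) d (u v w : 'rV[R]_d) : dotp (v - w) u = dotp v u - dotp w u.
Proof. by rewrite dotpC dotpBr !(dotpC u). Qed.

Lemma dotpZl (R : realType) d (u v : 'rV[R]_d) a : dotp (a *: v) u = a * dotp v u.
Proof. by rewrite dotpC dotpZr dotpC. Qed.

Lemma sqdistE (R : realType) d (P Q : 'rV[R]_d) :
  sqdist P Q = dotp P P - 2 * dotp P Q + dotp Q Q.
Proof. rewrite /sqdist !dotpBl !dotpBr (dotpC Q P); lra. Qed.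

Lemma dotp_eq0 (R : realType) d (u : 'rV[R]_d) : dotp u u = 0 -> u = 0.
Proof.
move=> H; apply/rowP => k; rewrite mxE.
have hp : forall i : 'I_d, xpredT i -> 0 <= u 0 i * u 0 i by move=> i _; rewrite -expr2 sqr_ge0.
have := @psumr_eq0P _ _ xpredT (fun i => u 0 i * u 0 i) hp H k isT.
by move/eqP; rewrite mulf_eq0 orbb => /eqP.
Qed.

Definition Tf (R : realType) d (Qi : 'rV[R]_d) (ci : R) : set ('rV[R]_d * R) :=
  [set q | q.2 = 2 * dotp Qi q.1 - dotp Qi Qi + ci].

Lemma key (R : realType) d (Qi Qj : 'rV[R]_d) ci cj :
  vproj (Tf Qi ci `&` Tf Qj cj) = [set P | sqdist P Qi - sqdist P Qj = ci - cj].
Proof.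
apply/funext => P; apply/propext; split.
  case=> [[x z]] [h1 h2] <-; rewrite /Tf /= in h1 h2; rewrite /= !sqdistE (dotpC x Qi) (dotpC x Qj); lra.
rewrite /= !sqdistE (dotpC P Qi) (dotpC P Qj) => h.
exists (P, 2 * dotp Qi P - dotp Qi Qi + ci) => //; split; rewrite /Tf /=; lra.
Qed.

Lemma tangentSE (R : realType) d (Q : 'rV[R]_d) p :
  tangentS Q p <-> p.2 = 2 * dotp Q p.1 - dotp Q Q.
Proof. rewrite /tangentS /= dotpBr; split => ->; lra. Qed.
Lemma joins_neq (R : realType) n (G : gain_graph R n) (e : edge G) i j : joins e i j -> i != j.
Proof.
rewrite /joins; case/orP => /eqP E; have := ends_neq e; rewrite E //=.
by rewrite eq_sym.
Qed.

Lemma joinsC (R : realType) n (G : gain_graph R n) (e : edge G) i j : joins e i j -> joins e j i.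
Proof. by rewrite /joins orbC. Qed.

Lemma phi_anti (R : realType) n (G : gain_graph R n) (e : edge G) i j :
  joins e i j -> phi e j i = - phi e i j.
Proof.
move=> J; have nij := joins_neq J; move: J; rewrite /joins /phi.
have nji : (j == i) = false by apply/negbTE; rewrite eq_sym.
case/orP => /eqP ->; rewrite !xpair_eqE ?eqxx /= ?(negbTE nij) ?nji /=.
  by [].
by rewrite opprK.
Qed.

Lemma phi_tele (R : realType) n (G : gain_graph R n) (c : 'I_n -> R) (e : edge G) i j :
  (forall e : edge G, gain e = c (ends e).1 - c (ends e).2) -> joins e i j -> phi e i j = c i - c j.
Proof.
move=> Hc J; have nij := joins_neq J; move: J; rewrite /joins /phi Hc.
have nji : (j == i) = false by apply/negbTE; rewrite eq_sym.
case/orP => /eqP ->; rewrite !xpair_eqE ?eqxx /= ?(negbTE nij) ?nji //=.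
by rewrite opprB.
Qed.

Lemma joins_eq (R : realType) n (G : gain_graph R n) (e : edge G) a b a' b' :
  joins e a b -> joins e a' b' -> (a = a' /\ b = b') \/ (a = b' /\ b = a').
Proof.
rewrite /joins => /orP[] /eqP -> /orP[] /eqP [] -> ->; tauto.
Qed.

Lemma bal2 (R : realType) n (G : gain_graph R n) (B : balanced G) (e f : edge G) i j :
  joins e i j -> joins f i j -> phi e i j = phi f i j.
Proof.
move=> Je Jf; have nij := joins_neq Je.
have [->|nef] := eqVneq e f; first by [].
pose v := fun m : 'I_2 => if val m == 0%N then i else j.
pose es := fun m : 'I_2 => if val m == 0%N then e else f.
have := B 2 v es isT.
have inj2 : forall a b : 'I_2, val a != val b -> a != b.
  by move=> a b; apply: contra => /eqP ->.
have vinj : injective v.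
  move=> [[|[|a]] Ha] [[|[|b]] Hb]; rewrite /v /= => E;
  first [by apply: val_inj | by [] | by move: nij; rewrite E eqxx].
have einj : injective es.
  move=> [[|[|a]] Ha] [[|[|b]] Hb]; rewrite /es /= => E;
  first [by apply: val_inj | by [] | by move: nef; rewrite E eqxx].
move=> /(_ vinj einj) H.
have jj : forall m, joins (es m) (v m) (v (ordS m)).
  move=> [[|[|a]] Ha]; rewrite /es /v /=; first [done | exact: joinsC Jf].
move: (H jj); rewrite !big_ord_recl big_ord0 /= (phi_anti Jf).
set x := phi _ _ _; set y := phi _ _ _; lra.
Qed.

Ltac kill := match goal with H : is_true (?x != ?x) |- _ => by rewrite eqxx in H end.

Lemma bal3 (R : realType) n (G : gain_graph R n) (B : balanced G) (e f g : edge G) i j l :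
  joins e i j -> joins f j l -> joins g l i -> i != l ->
  phi e i j + phi f j l + phi g l i = 0.
Proof.
move=> Je Jf Jg nil; have nij := joins_neq Je; have njl := joins_neq Jf.
pose v := fun m : 'I_3 => if val m == 0%N then i else if val m == 1%N then j else l.
pose es := fun m : 'I_3 => if val m == 0%N then e else if val m == 1%N then f else g.
have := B 3 v es isT.
have vinj : injective v.
  move=> [[|[|[|a]]] Ha] [[|[|[|b]]] Hb]; rewrite /v /= => E;
  first [by apply: val_inj | by [] | subst; kill].
have einj : injective es.
  move=> [[|[|[|a]]] Ha] [[|[|[|b]]] Hb]; rewrite /es /= => E;
  first [by apply: val_inj | by [] | subst;
    first [case: (joins_eq Je Jf) | case: (joins_eq Jf Jg) | case: (joins_eq Je Jg)];
    move=> [? ?]; subst; kill].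
move=> /(_ vinj einj) H.
have jj : forall m, joins (es m) (v m) (v (ordS m)).
  move=> [[|[|[|a]]] Ha]; rewrite /es /v /=; done.
move: (H jj); rewrite !big_ord_recl big_ord0 /= addr0 addrA //.
Qed.
Lemma arr_eq (R : realType) d n (G : gain_graph R n) (Q : 'I_n -> 'rV[R]_d)
  (T : 'I_n -> set ('rV[R]_d * R)) :
  complete G ->
  (forall e : edge G, pyth_hyp Q e = vproj (T (ends e).1 `&` T (ends e).2)) ->
  pyth_arr G Q = derived_arr T.
Proof.
move=> C PH; apply/funext => h; apply/propext; split.
  case=> e ->; rewrite PH; have := ends_neq e.
  case: (ends e) => a b /= nab.
  case: (ltngtP a b) => hab.
  - by exists a, b.
  - by exists b, a; rewrite setIC.
  - by move: nab; rewrite (val_inj hab) eqxx.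
case=> i [j [hij ->]].
have nij : i != j by apply/eqP => E; rewrite E ltnn in hij.
have [e Je] := C i j nij; exists e.
by case/orP: Je => /eqP E; rewrite PH E //= setIC.
Qed.

Lemma partA (R : realType) (d n : nat) :
  (forall (T : 'I_n -> set ('rV[R]_d * R)) (Q : 'I_n -> 'rV[R]_d),
     (forall i, nonvertical_hyperplane (T i)) ->
     (forall i j, i != j -> ~ parallel (T i) (T j)) ->
     (forall i, exists v, translate (T i) v = tangentS (Q i)) ->
     exists Psi : gain_graph R n,
       balanced Psi /\ complete Psi /\ pyth_arr Psi Q = derived_arr T).
Proof.
move=> T Q _ _ Htr.
have [v Hv] := choice Htr.
pose c i := 2 * dotp (Q i) (v i).1 - (v i).2.
have TE : forall i, T i = Tf (Q i) (c i).
  move=> i; apply/funext => -[x z]; apply/propext.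
  have := congr1 (fun S => S (x + (v i).1, z + (v i).2)) (Hv i).
  rewrite /translate /= !addrK => ->.
  rewrite (propext (tangentSE _ _)) /Tf /= dotpDr /c; split => H; lra.
pose E := {p : 'I_n * 'I_n | (p.1 < p.2)%N}.
have En : forall p : E, (val p).1 != (val p).2.
  by move=> [[a b] /= h]; apply/eqP => Eab; rewrite Eab ltnn in h.
pose Psi := @GainGraph R n E (fun p => val p) (fun p => c (val p).1 - c (val p).2) En.
have CP : complete Psi.
  move=> i j nij; case: (ltngtP i j) => h.
  - by exists (exist _ (i, j) h); rewrite /joins /= eqxx.
  - by exists (exist _ (j, i) h); rewrite /joins /= eqxx orbT.
  - by move: nij; rewrite (val_inj h) eqxx.
exists Psi; split; last split => //.
  move=> k vv es _ _ _ J.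
  rewrite (eq_bigr (fun m => c (vv m) - c (vv (ordS m)))); last first.
    by move=> m _; apply: (phi_tele (c := c)) (J m).
  by rewrite sumrB (reindex_inj (@ordS_inj k)) subrr.
apply: arr_eq => // e.
by rewrite !TE key.
Qed.

Lemma partB (R : realType) (d n : nat) :
  (forall (Phi : gain_graph R n) (Q : 'I_n -> 'rV[R]_d),
     balanced Phi -> complete Phi -> injective Q ->
     exists T : 'I_n -> set ('rV[R]_d * R),
       (forall i, nonvertical_hyperplane (T i)) /\
       (forall i j, i != j -> ~ parallel (T i) (T j)) /\
       (forall i, exists v, translate (T i) v = tangentS (Q i)) /\
       pyth_arr Phi Q = derived_arr T).
Proof.
case: n => [|n] Phi Q B C Qinj.
  exists (fun _ => set0); do 3 (split; first by case).
  apply/funext => h; apply/propext; split.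
    by case=> e; case: (ends e) => -[].
  by case=> -[].
have Hc : forall i : 'I_n.+1, exists r : R,
    (i = ord0 -> r = 0) /\ (forall e : edge Phi, joins e i ord0 -> phi e i ord0 = r).
  move=> i; have [->|ni] := eqVneq i ord0.
    exists 0; split=> // e J; by have := joins_neq J; rewrite eqxx.
  have [e0 Je0] := C i ord0 ni; exists (phi e0 i ord0).
  split => [Ei|e J]; first by rewrite Ei eqxx in ni.
  exact: (@bal2 _ _ Phi B e e0 i ord0 J Je0).
have [c Hc'] := choice Hc.
have c0 : c ord0 = 0 by case: (Hc' ord0) => h _; exact: h.
have main : forall (e : edge Phi) i j, joins e i j -> phi e i j = c i - c j.
  move=> e i j J; have nij := joins_neq J.
  have [Ej|nj] := eqVneq j ord0.
    by subst; rewrite c0 subr0; exact: (Hc' i).2.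
  have [Ei|ni] := eqVneq i ord0.
    by subst; rewrite c0 sub0r (phi_anti (joinsC J)) ((Hc' j).2 e (joinsC J)).
  have [g Jg] := C j ord0 nj.
  have ni0 : ord0 != i by rewrite eq_sym.
  have [f Jf] := C ord0 i ni0.
  have := bal3 B J Jg Jf ni.
  rewrite ((Hc' j).2 g Jg) (phi_anti (joinsC Jf)) ((Hc' i).2 f (joinsC Jf)).
  set x := phi _ _ _; lra.
pose T i := Tf (Q i) (c i).
exists T; split; [|split; [|split]].
- move=> i; exists ((-2) *: Q i), 1, (c i - dotp (Q i) (Q i)); split; first exact: oner_neq0.
  apply/funext => -[x z]; apply/propext; rewrite /T /Tf /= dotpZl; split => H; lra.
- move=> i j nij [vv Hvv].
  have F : forall x, 2 * dotp (Q j) x - dotp (Q j) (Q j) + c j - vv.2 =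
      2 * dotp (Q i) (x - vv.1) - dotp (Q i) (Q i) + c i.
    move=> x; have : T j (x, 2 * dotp (Q j) x - dotp (Q j) (Q j) + c j) by [].
    by rewrite -Hvv /translate /T /Tf /=.
  have h1 := F (Q j - Q i); have h2 := F 0.
  rewrite !dotpBr !dotp0r (dotpC (Q j) (Q i)) in h1 h2.
  have : dotp (Q j - Q i) (Q j - Q i) = 0.
    rewrite dotpBl !dotpBr (dotpC (Q j) (Q i)); lra.
  move/dotp_eq0/eqP; rewrite subr_eq0 => /eqP /Qinj Eji.
  by move: nij; rewrite Eji eqxx.
- move=> i; exists (0, - c i); apply/funext => -[x z]; apply/propext.
  rewrite /translate /T /Tf (propext (tangentSE _ _)) /= subr0 opprK; split => H; lra.
apply: arr_eq => // e.
have ge : gain e = c (ends e).1 - c (ends e).2.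
  rewrite -(main e); last by rewrite /joins -surjective_pairing eqxx.
  by rewrite /phi -surjective_pairing eqxx.
by rewrite /pyth_hyp ge /T key.
Qed.

Theorem proposition9p2 (R : realType) (d n : nat) :
  (* (a) *)
  (forall (T : 'I_n -> set ('rV[R]_d * R)) (Q : 'I_n -> 'rV[R]_d),
     (forall i, nonvertical_hyperplane (T i)) ->
     (forall i j, i != j -> ~ parallel (T i) (T j)) ->
     (forall i, exists v, translate (T i) v = tangentS (Q i)) ->
     exists Psi : gain_graph R n,
       balanced Psi /\ complete Psi /\ pyth_arr Psi Q = derived_arr T) /\
  (* (b) *)
  (forall (Phi : gain_graph R n) (Q : 'I_n -> 'rV[R]_d),
     balanced Phi -> complete Phi -> injective Q ->
     exists T : 'I_n -> set ('rV[R]_d * R),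
       (forall i, nonvertical_hyperplane (T i)) /\
       (forall i j, i != j -> ~ parallel (T i) (T j)) /\
       (forall i, exists v, translate (T i) v = tangentS (Q i)) /\
       pyth_arr Phi Q = derived_arr T).
Proof. split; [exact: partA | exact: partB]. Qed.
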